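(* Let $(p_j)_{j\ge 0}$ be a probability distribution on $\mathbb N=\{0,1,2,\dots\}$ with $0<p_0+p_1<1$, probability generating function $P(z)=\sum_{j\ge0}p_jz^j$, and mean $m=P'(1)=\sum_{j\ge1}jp_j<1$. Let $G(z)=\sum_{j\ge1}g_jz^j$ be the probability generating function of the Yaglom limit $(g_j)_{j\ge1}$ of the Galton–Watson process with offspring distribution $(p_j)$. Assume $P(z)$ is analytic on the open disc $\mathcal B(0,r_P)=\{z\in\mathbb C:|z|<r_P\}$ for some $r_P>1$. Then $G(z)$ is analytic at $z=1$ if and only if there exists $r_G>1$ such that $G(z)$ is analytic on $\mathcal B(0,r_G)$.
   Context: A Galton–Watson (GW) process $\{Z_n\}_{n\ge0}$ is the Markov chain on $\mathbb N$ with $Z_n=\sum_{i=1}^{Z_{n-1}}\theta_i^{(n)}$, where the $\theta_i^{(n)}$ are i.i.d. with law $(p_j)$; state $0$ is absorbing. Since $m<1$ (subcritical case), there is a unique probability distribution $(g_j)_{j\ge1}$ on $\{1,2,\dots\}$ (the Yaglom limit) with $\lim_{n\to\infty}\mathbb P(Z_n=j\mid Z_n>0, Z_0=\ell)=g_j$ for all $\ell,j\ge1$; its generating function $G(z)=\sum_{j\ge1}g_jz^j$ is the unique probability generating function satisfying $G(0)=0$ and $G(P(z))=mG(z)+1-m$ for $z\in[0,1]$ (and hence for $|z|\le1$). *)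

(* Defs.v *)
From Stdlib Require Import Reals Arith.
From Coquelicot Require Import Coquelicot.
Open Scope R_scope.

Definition conv (a b : nat -> R) (n : nat) : R :=
  sum_f_R0 (fun k => a k * b (n - k)%nat) n.

Fixpoint cpow (a : nat -> R) (k : nat) : nat -> R :=
  match k with
  | O => fun j => if Nat.eqb j 0 then 1 else 0
  | S k' => conv a (cpow a k')
  end.

(* gw_law p l n j = P(Z_n = j | Z_0 = l) for the Galton-Watson process with
   offspring law p : Z_n = sum_{i=1}^{Z_{n-1}} theta_i^(n). *)
Fixpoint gw_law (p : nat -> R) (l : nat) (n : nat) : nat -> R :=
  match n with
  | O => fun j => if Nat.eqb j l then 1 else 0
  | S n' => fun j => Series (fun k => gw_law p l n' k * cpow p k j)
  end.

Definition is_yaglom_limit (p g : nat -> R) : Prop :=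
  forall l j : nat, (1 <= l)%nat -> (1 <= j)%nat ->
    is_lim_seq (fun n => gw_law p l n j / (1 - gw_law p l n 0)) (g j).

Definition analytic_at (F : C -> C) (z0 : C) : Prop :=
  exists (r : R) (a : nat -> C), 0 < r /\
    forall z : C, Cmod (z - z0) < r ->
      is_series (fun n => a n * pow_n (z - z0) n)%C (F z).

Definition gf_is (a : nat -> R) (z w : C) : Prop :=
  is_series (fun n => RtoC (a n) * pow_n z n)%C w.

(* The generating function sum a_n z^n (defined on the closed unit disc)
   is analytic at the point z0: it extends analytically to a neighbourhood
   of z0, i.e. some function analytic at z0 agrees with it on |z| < 1. *)
Definition gf_analytic_at (a : nat -> R) (z0 : C) : Prop :=
  exists F : C -> C, analytic_at F z0 /\
    forall z : C, Cmod z < 1 -> gf_is a z (F z).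

Definition gf_analytic_on_disc (a : nat -> R) (r : R) : Prop :=
  exists F : C -> C, (forall z : C, Cmod z < r -> analytic_at F z) /\
    forall z : C, Cmod z < 1 -> gf_is a z (F z).

(* Main.v *)
Require Import Defs.
From Stdlib Require Import Reals Arith Lra Lia.
From Coquelicot Require Import Coquelicot.
Open Scope R_scope.


Unset Printing All.
Lemma sum_n_Re (a : nat -> C) n : Re (sum_n a n) = sum_n (fun k => Re (a k)) n.
Proof. induction n. - rewrite !sum_O. reflexivity. - rewrite !sum_Sn, <- IHn. reflexivity. Qed.
Lemma sum_n_Im (a : nat -> C) n : Im (sum_n a n) = sum_n (fun k => Im (a k)) n.
Proof. induction n. - rewrite !sum_O. reflexivity. - rewrite !sum_Sn, <- IHn. reflexivity. Qed.
Lemma is_series_C_iff (a : nat -> C) (l : C) :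
  is_series a l <-> is_series (fun n => Re (a n)) (Re l) /\ is_series (fun n => Im (a n)) (Im l).
Proof.
  unfold is_series. split.
  - intros H. pose proof (proj1 (filterlim_locally _ _) H) as H'.
    split; apply (proj2 (filterlim_locally _ _)); intros eps; destruct (H' eps) as [N HN]; exists N; intros n Hn;
    specialize (HN n Hn); destruct HN as [H1 H2]; [change (ball (Re l) eps (Re (sum_n a n))) in H1; rewrite sum_n_Re in H1 | change (ball (Im l) eps (Im (sum_n a n))) in H2; rewrite sum_n_Im in H2]; assumption.
  - intros [H1 H2]. apply (proj2 (filterlim_locally _ _)). intros eps.
    destruct (proj1 (filterlim_locally _ _) H1 eps) as [N1 HN1].
    destruct (proj1 (filterlim_locally _ _) H2 eps) as [N2 HN2].
    exists (max N1 N2). intros n Hn. split.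
    + change (ball (Re l) eps (Re (sum_n a n))). rewrite sum_n_Re. apply HN1. lia.
    + change (ball (Im l) eps (Im (sum_n a n))). rewrite sum_n_Im. apply HN2. lia.
Qed.

Lemma L_radius (c : nat -> R) (rho : R) :
  (forall x, Rabs x < rho -> ex_series (fun n => c n * x^n)) ->
  forall y, Rabs y < rho -> Rbar_lt (Rabs y) (CV_radius c).
Proof.
  intros H y Hy.
  destruct (Rbar_lt_le_dec (Rabs y) (CV_radius c)) as [h|h]; auto.
  exfalso.
  set (x := (Rabs y + rho)/2).
  assert (Hx : Rabs x < rho).
  { unfold x. pose proof (Rabs_pos y). rewrite Rabs_pos_eq; lra. }
  assert (Hl : Rbar_lt (CV_radius c) (Rabs x)).
  { apply Rbar_le_lt_trans with (Rabs y); auto. simpl.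
    unfold x. pose proof (Rabs_pos y). rewrite (Rabs_pos_eq ((Rabs y + rho)/2)); lra. }
  apply (CV_disk_outside c x Hl). apply ex_series_lim_0. apply H; auto.
Qed.

Lemma psum_le (a : nat -> R) : (forall n, 0 <= a n) -> ex_series a ->
  forall N, sum_n a N <= Series a.
Proof.
  intros Hp He N. apply is_lim_seq_incr_compare.
  - apply (Series_correct a He).
  - intros n. rewrite sum_Sn. specialize (Hp (S n)). unfold plus; simpl. lra.
Qed.

Lemma ex_series_bounded (a : nat -> R) (M : R) : (forall n, 0 <= a n) ->
  (forall N, sum_n a N <= M) -> ex_series a.
Proof.
  intros Hp HM.
  destruct (ex_finite_lim_seq_incr (sum_n a) M) as [l Hl]; auto.
  - intros n. rewrite sum_Sn. specialize (Hp (S n)). unfold plus; simpl. lra.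
  - exists l. exact Hl.
Qed.

Lemma pow_n_RtoC (x : R) n : pow_n (RtoC x) n = RtoC (x ^ n).
Proof.
  induction n; simpl. reflexivity. rewrite IHn. unfold mult; simpl.
  unfold Cmult, RtoC; simpl. rewrite !Rmult_0_l, Rmult_0_r, Rminus_0_r, Rplus_0_l. reflexivity.
Qed.

Lemma Re_mult_RtoC (a : C) (t : R) : Re (a * RtoC t)%C = Re a * t.
Proof. destruct a as [a1 a2]. unfold Cmult, RtoC, Re; simpl. ring. Qed.

Ltac toR := match goal with |- ?a = ?b => change (@eq R a b) end.

Lemma sum_n_le' (a b : nat -> R) N : (forall n, (n <= N)%nat -> a n <= b n) -> sum_n a N <= sum_n b N.
Proof.
  induction N; intros H.
  - rewrite !sum_O. apply H. lia.
  - rewrite !sum_Sn. unfold plus; simpl. apply Rplus_le_compat. apply IHN. intros; apply H; lia. apply H; lia.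
Qed.

Lemma sum_n_Rmult_l (c : R) (u : nat -> R) n : sum_n (fun k => c * u k) n = c * sum_n u n.
Proof. exact (sum_n_mult_l c u n). Qed.

Lemma sum_n_zero' (a : nat -> R) N : (forall n, (n <= N)%nat -> a n = 0) -> sum_n a N = 0.
Proof.
  induction N; intros H.
  - rewrite sum_O. apply H. lia.
  - rewrite sum_Sn, IHN, (H (S N)) by (try intros; try apply H; lia). unfold plus; simpl. ring.
Qed.

Lemma sum_n_extend (f : nat -> R) N M : (forall i, (N < i)%nat -> f i = 0) -> (N <= M)%nat ->
  sum_n f N = sum_n f M.
Proof.
  intros Hf HNM. induction HNM. reflexivity.
  rewrite sum_Sn, <- IHHNM, Hf by lia. change (sum_n f N = Rplus (sum_n f N) 0); rewrite Rplus_0_r; reflexivity.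
Qed.

Lemma sum_n_shift_ind (h : nat -> R) i d :
  sum_n (fun N => if (i <=? N)%nat then h N else 0) (i + d) = sum_n (fun j => h (j + i)%nat) d.
Proof.
  induction d.
  - rewrite sum_O, Nat.add_0_r. simpl.
    destruct i.
    + rewrite sum_O. reflexivity.
    + rewrite sum_Sn, sum_n_zero'.
      * rewrite Nat.leb_refl. unfold plus; simpl. ring.
      * intros n Hn. destruct (Nat.leb_spec (S i) n); [lia | reflexivity].
  - rewrite Nat.add_succ_r, !sum_Sn, IHd.
    destruct (Nat.leb_spec i (S (i + d))); [|lia].
    replace (S d + i)%nat with (S (i + d)) by lia. reflexivity.
Qed.

Lemma comb (g c : nat -> R) (rho : R) : 0 <= rho -> (forall n, 0 <= g n) ->
  (forall i J, sum_n (PS_derive_n i g) J <= c i * INR (fact i)) ->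
  forall M, sum_n (fun N => g N * (1+rho)^N) M <= sum_n (fun i => c i * rho^i) M.
Proof.
  intros Hrho Hg Hc M.
  set (e := fun N i => if (i <=? N)%nat then g N * Binomial.C N i * rho^i else 0).
  assert (E1 : forall N, (N <= M)%nat -> g N * (1+rho)^N = sum_n (e N) M).
  { intros N HN. rewrite <- (sum_n_extend (e N) N M).
    - rewrite Rplus_comm, binomial, <- sum_n_Reals.
      rewrite <- sum_n_Rmult_l. apply sum_n_ext_loc. intros i Hi.
      unfold e. destruct (Nat.leb_spec i N); [|lia]. toR. rewrite pow1. ring.
    - intros i Hi. unfold e. destruct (Nat.leb_spec i N); [lia|reflexivity].
    - exact HN. }
  rewrite (sum_n_ext_loc _ (fun N => sum_n (e N) M) M E1).
  rewrite sum_n_switch.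
  apply sum_n_le'. intros i Hi.
  assert (E2 : sum_n (fun N => e N i) M =
     rho^i * sum_n (fun N => if (i <=? N)%nat then g N * Binomial.C N i else 0) M).
  { rewrite <- sum_n_Rmult_l. apply sum_n_ext. intros N. unfold e.
    destruct (i <=? N)%nat; toR; ring. }
  rewrite E2.
  pose proof (sum_n_shift_ind (fun N => g N * Binomial.C N i) i (M - i)) as E4.
  replace (i + (M - i))%nat with M in E4 by lia. cbv beta in E4. rewrite E4.
  assert (E3 : sum_n (fun j => g (j + i)%nat * Binomial.C (j + i) i) (M - i) =
     / INR (fact i) * sum_n (PS_derive_n i g) (M - i)).
  { rewrite <- sum_n_Rmult_l. apply sum_n_ext. intros j. 
    unfold PS_derive_n, Binomial.C. replace (j + i - i)%nat with j by lia.
    pose proof (INR_fact_neq_0 i). pose proof (INR_fact_neq_0 j). toR. field. auto. }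
  rewrite E3. specialize (Hc i (M - i)%nat).
  pose proof (INR_fact_lt_0 i).
  assert (/ INR (fact i) * sum_n (PS_derive_n i g) (M - i) <= c i).
  { apply Rmult_le_reg_l with (INR (fact i)); auto.
    rewrite <- Rmult_assoc, Rinv_r by lra. lra. }
  rewrite Rmult_comm. apply Rmult_le_compat_r. apply pow_le; auto. auto.
Qed.

Lemma w_lim (t : R) : is_lim_seq (fun n => - t / (INR n + 2)) 0.
Proof.
  assert (H1 : is_lim_seq (fun n => INR n + 2) p_infty).
  { eapply is_lim_seq_plus. apply is_lim_seq_INR. apply is_lim_seq_const. simpl. constructor. }
  assert (H2 := is_lim_seq_inv _ _ H1 ltac:(discriminate)).
  assert (H3 := is_lim_seq_scal_l _ (- t) _ H2).
  simpl in H3. rewrite Rmult_0_r in H3. exact H3.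
Qed.

Lemma pow_lim (w : nat -> R) J : is_lim_seq w 0 -> is_lim_seq (fun n => (1 + w n)^J) 1.
Proof.
  intros Hw. induction J.
  - simpl. apply is_lim_seq_const.
  - simpl. assert (H := is_lim_seq_mult' _ _ _ _ (is_lim_seq_plus' _ _ _ _ (is_lim_seq_const 1) Hw) IHJ).
    rewrite Rplus_0_r, Rmult_1_l in H. exact H.
Qed.

Lemma sum_n_nonneg (c : nat -> R) J : (forall j, 0 <= c j) -> 0 <= sum_n c J.
Proof.
  intros Hc. induction J. rewrite sum_O; auto. rewrite sum_Sn. unfold plus; simpl.
  specialize (Hc (S J)). lra.
Qed.

Lemma pow_sum_le (c : nat -> R) (x : R) J : 0 <= x <= 1 -> (forall j, 0 <= c j) ->
  x^J * sum_n c J <= sum_n (fun j => c j * x^j) J.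
Proof.
  intros Hx Hc. induction J.
  - rewrite !sum_O. simpl. lra.
  - rewrite !sum_Sn. unfold plus; simpl.
    assert (0 <= x^J) by (apply pow_le; lra).
    assert (x * x^J <= x^J) by (pose proof (Rmult_le_compat_r (x^J) x 1 H ltac:(lra)); lra).
    assert (0 <= sum_n c J).
    { apply sum_n_nonneg; auto. }
    pose proof (Rmult_le_compat_r (sum_n c J) _ _ H1 H0).
    rewrite Rmult_plus_distr_l. lra.
Qed.

Lemma ex_pseries_R (a : nat -> R) x : ex_pseries a x -> ex_series (fun n => a n * x^n).
Proof.
  intros H. eapply ex_series_ext; [|exact H]. intros n. simpl. rewrite pow_n_pow.
  unfold scal; simpl; unfold mult; simpl. ring.
Qed.

Lemma key (g b : nat -> R) (r : R) (Rf : R -> R) :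
  0 < r -> (forall n, 0 <= g n) ->
  (forall y, Rabs (y-1) < r -> is_series (fun n => b n * (y-1)^n) (Rf y)) ->
  (forall y, Rabs y < 1 -> is_series (fun n => g n * y^n) (Rf y)) ->
  forall k J, sum_n (PS_derive_n k g) J <= b k * INR (fact k).
Proof.
  intros hr Hg B1 B2 k J.
  assert (Rb : forall y, Rabs y < r -> Rbar_lt (Rabs y) (CV_radius b)).
  { apply L_radius. intros x Hx. red. exists (Rf (x + 1)).
    eapply is_series_ext; [|apply B1]. intros n. simpl. replace (x + 1 - 1) with x by ring. reflexivity.
    replace (x + 1 - 1) with x by ring. auto. }
  assert (Rg : forall y, Rabs y < 1 -> Rbar_lt (Rabs y) (CV_radius g)).
  { apply L_radius. intros x Hx. red. exists (Rf x). auto. }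
  set (t := Rmin r 1 / 2).
  assert (Ht : 0 < t /\ t < r /\ t < 1).
  { unfold t. pose proof (Rmin_l r 1). pose proof (Rmin_r r 1).
    assert (Rmin r 1 > 0) by (apply Rmin_glb_lt; lra). lra. }
  set (D := PSeries (PS_derive_n k b)).
  assert (HD : forall w, -t < w < 0 ->
     (1 + w)^J * sum_n (PS_derive_n k g) J <= D w).
  { intros w Hw.
    set (x := 1 + w).
    assert (Hx1 : Rabs x < 1) by (unfold x; rewrite Rabs_pos_eq; lra).
    assert (E1 : Derive_n (PSeries g) k x = Derive_n (fun y => PSeries b (y + -1)) k x).
    { apply Derive_n_ext_loc.
      assert (Heps : 0 < Rmin (x - (1 - t)) (1 - x)).
      { apply Rmin_pos; unfold x; lra. }
      exists (mkposreal _ Heps). intros y Hy.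
      unfold ball in Hy; simpl in Hy; unfold AbsRing_ball, abs, minus, plus, opp in Hy; simpl in Hy.
      pose proof (Rmin_l (x - (1 - t)) (1 - x)). pose proof (Rmin_r (x - (1 - t)) (1 - x)).
      apply Rabs_def2 in Hy. destruct Hy.
      unfold PSeries.
      rewrite (is_series_unique _ _ (B2 y ltac:(rewrite Rabs_pos_eq; lra))).
      replace (y + -1) with (y - 1) by ring.
      rewrite (is_series_unique _ _ (B1 y ltac:(rewrite Rabs_left; lra))). reflexivity. }
    rewrite Derive_n_comp_trans in E1.
    rewrite Derive_n_PSeries in E1 by (apply Rg; auto).
    rewrite Derive_n_PSeries in E1.
    2:{ apply Rb. unfold x. replace (1 + w + -1) with w by ring. rewrite Rabs_left; lra. }
    unfold x in E1. replace (1 + w + -1) with w in E1 by ring. fold D in E1.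
    rewrite <- E1.
    unfold x. eapply Rle_trans. apply pow_sum_le. lra.
    { intros j. unfold PS_derive_n. apply Rmult_le_pos; auto.
      apply Rmult_le_pos. apply pos_INR. apply Rlt_le, Rinv_0_lt_compat, INR_fact_lt_0. }
    apply psum_le.
    { intros j. unfold PS_derive_n. apply Rmult_le_pos; [|apply pow_le; lra]. apply Rmult_le_pos; auto.
      apply Rmult_le_pos. apply pos_INR. apply Rlt_le, Rinv_0_lt_compat, INR_fact_lt_0. }
    apply ex_pseries_R. apply CV_radius_inside. rewrite CV_radius_derive_n. apply Rg. auto. }
  set (w := fun n => - t / (INR n + 2)).
  assert (Hw : forall n, -t < w n < 0).
  { intros n. unfold w. pose proof (pos_INR n). set (d := INR n + 2).
    assert (0 < t / d) by (apply Rdiv_lt_0_compat; unfold d; lra).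
    assert (t / d < t).
    { apply Rmult_lt_reg_r with d. unfold d; lra. unfold Rdiv. rewrite Rmult_assoc, Rinv_l by (unfold d; lra).
      unfold d; nra. }
    replace (- t / d) with (- (t / d)) by (unfold Rdiv; ring). lra. }
  assert (L1 := is_lim_seq_mult' _ _ _ _ (pow_lim w J (w_lim t)) (is_lim_seq_const (sum_n (PS_derive_n k g) J))).
  assert (Hc : continuity_pt D 0).
  { apply PSeries_continuity. rewrite CV_radius_derive_n. apply Rb. rewrite Rabs_R0. lra. }
  assert (L2 := is_lim_seq_continuous D w 0 Hc (w_lim t)).
  assert (L := is_lim_seq_le _ _ _ _ (fun n => HD (w n) (Hw n)) L1 L2).
  simpl in L. unfold D in L. rewrite PSeries_0 in L. unfold PS_derive_n in L.
  rewrite Nat.add_0_l in L. replace (INR (fact 0)) with 1 in L by reflexivity.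
  rewrite Rmult_1_l in L. unfold Rdiv in L. rewrite Rinv_1, Rmult_1_r in L. rewrite Rmult_comm. exact L.
Qed.

Lemma is_series_sum_n (f : nat -> nat -> R) (L : nat -> R) :
  (forall k, is_series (fun n => f n k) (L k)) ->
  forall M, is_series (fun n => sum_n (f n) M) (sum_n L M).
Proof.
  intros H M. induction M.
  - rewrite sum_O. eapply is_series_ext; [|apply (H 0%nat)]. intros n. rewrite sum_O. reflexivity.
  - rewrite sum_Sn. eapply is_series_ext; [|apply (is_series_plus _ _ _ _ IHM (H (S M)))].
    intros n. cbv beta. rewrite sum_Sn. reflexivity.
Qed.

Lemma dbl (f : nat -> nat -> R) (beta : nat -> R) (L : nat -> R) (T : R) :
  (forall n k, (n < k)%nat -> f n k = 0) ->
  (forall n M, sum_n (fun k => Rabs (f n k)) M <= beta n) ->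
  ex_series beta ->
  (forall k, is_series (fun n => f n k) (L k)) ->
  is_series (fun n => sum_n (f n) n) T ->
  is_series L T.
Proof.
  intros Hz Hb Hbeta HL HT.
  set (row := fun n => sum_n (f n) n).
  assert (HU := is_series_sum_n f L HL).
  assert (Habs : forall n M, Rabs (sum_n (f n) M) <= beta n).
  { intros n M. eapply Rle_trans; [|apply (Hb n M)].
    clear. induction M. rewrite !sum_O. lra.
    rewrite !sum_Sn. unfold plus; simpl. eapply Rle_trans. apply Rabs_triang. lra. }
  assert (Hbpos : forall n, 0 <= beta n).
  { intros n. eapply Rle_trans; [|apply (Habs n 0%nat)]. apply Rabs_pos. }
  set (tau := fun M => Series (fun j => beta (S M + j)%nat)).
  assert (Etau : forall M, tau M = Series beta - sum_n beta M).
  { intros M. unfold tau. rewrite (Series_incr_n beta (S M)) by (lia || auto).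
    simpl pred. rewrite sum_n_Reals. ring. }
  assert (Ltau : is_lim_seq tau 0).
  { eapply is_lim_seq_ext. intros M. symmetry. apply Etau.
    replace 0 with (Series beta - Series beta) by ring.
    apply is_lim_seq_minus'. apply is_lim_seq_const. apply (Series_correct _ Hbeta). }
  set (e := fun M => sum_n L M - sum_n row M).
  assert (He : forall M, Rabs (e M) <= tau M).
  { intros M. unfold e.
    assert (Hex : ex_series (fun n => sum_n (f n) M)) by (eexists; apply HU).
    rewrite <- (is_series_unique _ _ (HU M)).
    rewrite (Series_incr_n _ (S M)) by (lia || auto). simpl pred.
    rewrite <- sum_n_Reals.
    rewrite (sum_n_ext_loc (fun n => sum_n (f n) M) row M).
    2:{ intros n Hn. unfold row. symmetry. apply sum_n_extend; auto. }
    replace (sum_n row M + Series (fun k => sum_n (f (S M + k)%nat) M) - sum_n row M)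
      with (Series (fun k => sum_n (f (S M + k)%nat) M)) by ring.
    assert (Hexb : ex_series (fun j => beta (S M + j)%nat)) by (apply ex_series_incr_n; auto).
    eapply Rle_trans. apply Series_Rabs.
    { apply (@ex_series_le R_AbsRing R_CompleteNormedModule) with (fun j => beta (S M + j)%nat); auto.
      intros n. unfold norm; simpl. unfold abs; simpl. rewrite Rabs_Rabsolu. apply Habs. }
    apply Series_le; auto. intros n. split. apply Rabs_pos. apply Habs. }
  assert (Le : is_lim_seq e 0).
  { apply is_lim_seq_le_le with (fun M => - tau M) tau; auto.
    - intros M. specialize (He M). apply Rabs_le_between in He. lra.
    - assert (H := proj1 (is_lim_seq_opp _ _) Ltau). simpl in H. rewrite Ropp_0 in H. exact H. }
  assert (Lr : is_lim_seq (sum_n row) T) by exact HT.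
  assert (Lsum := is_lim_seq_plus' _ _ _ _ Lr Le).
  rewrite Rplus_0_r in Lsum.
  change (is_lim_seq (sum_n L) T). eapply is_lim_seq_ext; [|exact Lsum]. intros M. unfold e. ring.
Qed.

Lemma im_le_Cmod (c : C) : Rabs (Im c) <= Cmod c.
Proof.
  pose proof (Cmod2_alt c). pose proof (Cmod_ge_0 c). pose proof (pow2_abs (Im c)).
  pose proof (Rabs_pos (Im c)).
  destruct (Rle_or_lt (Rabs (Im c)) (Cmod c)); auto.
  assert (Cmod c ^ 2 < Rabs (Im c) ^ 2) by nra.
  assert (0 <= Re c ^ 2) by (apply pow2_ge_0). lra.
Qed.

Lemma dblC (f : nat -> nat -> C) (beta : nat -> R) (L : nat -> C) (T : C) :
  (forall n k, (n < k)%nat -> f n k = RtoC 0) ->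
  (forall n M, sum_n (fun k => Cmod (f n k)) M <= beta n) ->
  ex_series beta ->
  (forall k, is_series (fun n => f n k) (L k)) ->
  is_series (fun n => sum_n (f n) n) T ->
  is_series L T.
Proof.
  intros Hz Hb Hbeta HL HT.
  apply is_series_C_iff in HT. destruct HT as [HT1 HT2].
  apply is_series_C_iff. split.
  - apply dbl with (fun n k => Re (f n k)) beta; auto.
    + intros n k H. rewrite Hz; auto.
    + intros n M. eapply Rle_trans; [|apply (Hb n M)]. apply sum_n_le'. intros; apply re_le_Cmod.
    + intros k. apply (proj1 (proj1 (is_series_C_iff _ _) (HL k))).
    + eapply is_series_ext; [|exact HT1]. intros n. cbv beta. apply sum_n_Re.
  - apply dbl with (fun n k => Im (f n k)) beta; auto.
    + intros n k H. rewrite Hz; auto.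
    + intros n M. eapply Rle_trans; [|apply (Hb n M)]. apply sum_n_le'. intros; apply im_le_Cmod.
    + intros k. apply (proj2 (proj1 (is_series_C_iff _ _) (HL k))).
    + eapply is_series_ext; [|exact HT2]. intros n. cbv beta. apply sum_n_Im.
Qed.

Definition Cser (u : nat -> C) : C := (Series (fun n => Re (u n)), Series (fun n => Im (u n))).

Lemma Cser_correct (u : nat -> C) : ex_series u -> is_series u (Cser u).
Proof.
  intros [l Hl]. assert (H := Hl). apply is_series_C_iff in H. destruct H as [H1 H2].
  unfold Cser. rewrite (is_series_unique _ _ H1), (is_series_unique _ _ H2).
  destruct l; exact Hl.
Qed.

Lemma Cmod_pow_n (z : C) n : Cmod (pow_n z n) = Cmod z ^ n.
Proof.
  induction n. simpl. apply Cmod_1.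
  change (pow_n z (S n)) with (z * pow_n z n)%C. rewrite Cmod_mult, IHn. reflexivity.
Qed.

Fixpoint Pc (z0 : C) (n k : nat) : C :=
  match n with
  | O => if Nat.eqb k 0 then RtoC 1 else RtoC 0
  | S n' => (z0 * Pc z0 n' k + match k with O => RtoC 0 | S k' => Pc z0 n' k' end)%C
  end.

Fixpoint PR (x0 : R) (n k : nat) : R :=
  match n with
  | O => if Nat.eqb k 0 then 1 else 0
  | S n' => x0 * PR x0 n' k + match k with O => 0 | S k' => PR x0 n' k' end
  end.

Lemma Pc_zero z0 n k : (n < k)%nat -> Pc z0 n k = RtoC 0.
Proof.
  revert k. induction n; intros k Hk; simpl.
  - destruct (Nat.eqb_spec k 0); [lia|reflexivity].
  - rewrite IHn by lia. destruct k. lia. rewrite IHn by lia. ring.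
Qed.

Lemma PR_nonneg x0 n k : 0 <= x0 -> 0 <= PR x0 n k.
Proof.
  intros Hx. revert k. induction n; intros k; simpl.
  - destruct (Nat.eqb k 0); lra.
  - destruct k. specialize (IHn 0%nat). nra. pose proof (IHn (S k)). pose proof (IHn k). nra.
Qed.

Lemma Pc_bound z0 n k : Cmod (Pc z0 n k) <= PR (Cmod z0) n k.
Proof.
  revert k. induction n; intros k; simpl.
  - destruct (Nat.eqb k 0). rewrite Cmod_1; lra. rewrite Cmod_0; lra.
  - eapply Rle_trans. apply Cmod_triangle. rewrite Cmod_mult.
    pose proof (Cmod_ge_0 z0).
    apply Rplus_le_compat. apply Rmult_le_compat_l; auto.
    destruct k. rewrite Cmod_0; lra. auto.
Qed.

Lemma Pc_RtoC x0 n k : Pc (RtoC x0) n k = RtoC (PR x0 n k).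
Proof.
  revert k. induction n; intros k; simpl.
  - destruct (Nat.eqb k 0); reflexivity.
  - rewrite IHn. destruct k. 
    + unfold RtoC, Cmult, Cplus; simpl. f_equal; ring.
    + rewrite IHn. unfold RtoC, Cmult, Cplus; simpl. f_equal; ring.
Qed.

Ltac toC := match goal with |- ?a = ?b => change (@eq C a b) end.

Lemma sum_n_extend_G {G : AbelianMonoid} (f : nat -> G) N M :
  (forall i, (N < i)%nat -> f i = zero) -> (N <= M)%nat -> sum_n f N = sum_n f M.
Proof.
  intros Hf HNM. induction HNM. reflexivity.
  rewrite sum_Sn, <- IHHNM, Hf by lia. rewrite plus_zero_r. reflexivity.
Qed.

Lemma sum_n_Sshift {G : AbelianMonoid} (a : nat -> G) M :
  sum_n a (S M) = plus (a 0%nat) (sum_n (fun j => a (S j)) M).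
Proof.
  unfold sum_n. rewrite sum_Sn_m by lia. rewrite sum_n_m_S. reflexivity.
Qed.

Lemma sum_n_Cmult_l (c : C) (u : nat -> C) n : sum_n (fun k => c * u k)%C n = (c * sum_n u n)%C.
Proof. exact (sum_n_mult_l c u n). Qed.

Lemma sum_n_Cplus (u v : nat -> C) n : sum_n (fun k => u k + v k)%C n = (sum_n u n + sum_n v n)%C.
Proof. exact (sum_n_plus u v n). Qed.

Lemma Pc_sum z0 w n M : (n <= M)%nat ->
  sum_n (fun k => Pc z0 n k * pow_n w k)%C M = pow_n (z0 + w)%C n.
Proof.
  revert M. induction n; intros M HM.
  - rewrite <- (sum_n_extend_G _ 0 M); auto.
    + rewrite sum_O. simpl. change (one : C) with (RtoC 1). toC. ring.
    + intros i Hi. rewrite Pc_zero by lia. change (zero : C) with (RtoC 0). toC. ring.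
  - destruct M as [|M']. lia.
    transitivity (sum_n (fun k => z0 * (Pc z0 n k * pow_n w k) +
        (match k with O => RtoC 0 | S k' => Pc z0 n k' end) * pow_n w k)%C (S M')).
    { apply sum_n_ext. intros k. simpl. toC. ring. }
    rewrite sum_n_Cplus, sum_n_Cmult_l, IHn by lia.
    rewrite sum_n_Sshift.
    transitivity ((z0 * pow_n (z0 + w) n)%C + plus (RtoC 0 * pow_n w 0)%C
       (sum_n (fun j => w * (Pc z0 n j * pow_n w j)) M'))%C.
    { f_equal. f_equal. apply sum_n_ext. intros j. simpl. change (mult w (pow_n w j)) with (w * pow_n w j)%C. toC. ring. }
    change (plus ?a ?b) with (a + b)%C.
    rewrite sum_n_Cmult_l, IHn by lia.
    change (pow_n (z0 + w)%C (S n)) with ((z0 + w) * pow_n (z0 + w) n)%C. toC. ring.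
Qed.

Lemma PR_sum x y n M : (n <= M)%nat -> sum_n (fun k => PR x n k * y^k) M = (x + y)^n.
Proof.
  intros HM. pose proof (Pc_sum (RtoC x) (RtoC y) n M HM) as H.
  apply (f_equal Re) in H. rewrite sum_n_Re in H.
  replace (RtoC x + RtoC y)%C with (RtoC (x + y)) in H by (unfold RtoC, Cplus; simpl; f_equal; ring).
  rewrite pow_n_RtoC in H. simpl in H. rewrite <- H.
  apply sum_n_ext. intros k. rewrite Pc_RtoC, pow_n_RtoC. unfold RtoC, Cmult, Re; simpl. ring.
Qed.

Lemma sum_n_mono (h : nat -> R) M N : (forall k, 0 <= h k) -> (M <= N)%nat -> sum_n h M <= sum_n h N.
Proof.
  intros Hh HMN. induction HMN. lra. rewrite sum_Sn. unfold plus; simpl. specialize (Hh (S m)). lra.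
Qed.

Lemma term_le_sum (h : nat -> R) k M : (forall k, 0 <= h k) -> (k <= M)%nat -> h k <= sum_n h M.
Proof.
  intros Hh HkM. eapply Rle_trans; [|apply (sum_n_mono h k M Hh HkM)].
  destruct k. rewrite sum_O. lra. rewrite sum_Sn. unfold plus; simpl.
  pose proof (sum_n_nonneg h k Hh). lra.
Qed.

Lemma recenter (g : nat -> R) (s : R) : (forall n, 0 <= g n) -> 1 <= s ->
  ex_series (fun n => g n * s^n) -> gf_analytic_on_disc g s.
Proof.
  intros Hg Hs Hser.
  set (Fp := fun z => Cser (fun n => RtoC (g n) * pow_n z n)%C).
  assert (FpC : forall z, Cmod z <= s -> is_series (fun n => RtoC (g n) * pow_n z n)%C (Fp z)).
  { intros z Hz. apply Cser_correct.
    apply (@ex_series_le C_AbsRing C_CompleteNormedModule) with (fun n => g n * s^n); auto.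
    intros n. change (Cmod (RtoC (g n) * pow_n z n)%C <= g n * s^n). rewrite Cmod_mult, Cmod_R, Cmod_pow_n, Rabs_pos_eq by auto.
    apply Rmult_le_compat_l; auto. apply pow_incr; split; [apply Cmod_ge_0| auto]. }
  exists Fp. split.
  2:{ intros z Hz. unfold gf_is. apply FpC. lra. }
  intros z0 Hz0.
  pose proof (Cmod_ge_0 z0) as Hz0p.
  set (r0 := s - Cmod z0).
  assert (Hr0 : 0 < r0) by (unfold r0; lra).
  set (A := fun k => Cser (fun n => RtoC (g n) * Pc z0 n k)%C).
  assert (Col : forall k, ex_series (fun n => RtoC (g n) * Pc z0 n k)%C).
  { intros k.
    apply (@ex_series_le C_AbsRing C_CompleteNormedModule) with (fun n => g n * s^n * / r0^k).
    2:{ apply ex_series_scal_r. auto. }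
    intros n. change (Cmod (RtoC (g n) * Pc z0 n k)%C <= g n * s^n * / r0^k). rewrite Cmod_mult, Cmod_R, Rabs_pos_eq by auto.
    rewrite Rmult_assoc. apply Rmult_le_compat_l; auto.
    eapply Rle_trans. apply Pc_bound.
    assert (0 < r0^k) by (apply pow_lt; auto).
    apply Rmult_le_reg_r with (r0^k); auto. rewrite Rmult_assoc, Rinv_l by lra. rewrite Rmult_1_r.
    replace s with (Cmod z0 + r0) by (unfold r0; ring).
    rewrite <- (PR_sum (Cmod z0) r0 n (max n k)) by lia.
    apply (term_le_sum (fun j => PR (Cmod z0) n j * r0 ^ j)).
    intros j. apply Rmult_le_pos. apply PR_nonneg; auto. apply pow_le; lra. lia. }
  exists r0, A. split; auto. intros z Hz.
  set (w := (z - z0)%C).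
  pose proof (Cmod_ge_0 w) as Hwp.
  apply dblC with (f := fun n k => (RtoC (g n) * Pc z0 n k * pow_n w k)%C) (beta := fun n => g n * s^n); auto.
  - intros n k Hnk. rewrite Pc_zero by auto. ring.
  - intros n M.
    set (h := fun k => g n * (PR (Cmod z0) n k * Cmod w ^ k)).
    assert (Hh : forall k, 0 <= h k).
    { intros k. unfold h. apply Rmult_le_pos; auto. apply Rmult_le_pos. apply PR_nonneg; auto. apply pow_le; auto. }
    apply Rle_trans with (sum_n h M).
    { apply sum_n_le'. intros k _. unfold h. rewrite !Cmod_mult, Cmod_R, Rabs_pos_eq, Cmod_pow_n by auto.
      rewrite Rmult_assoc. apply Rmult_le_compat_l; auto. apply Rmult_le_compat_r. apply pow_le; auto.
      apply Pc_bound. }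
    apply Rle_trans with (sum_n h (max M n)). apply sum_n_mono; auto; lia.
    unfold h. rewrite sum_n_Rmult_l, PR_sum by lia.
    apply Rmult_le_compat_l; auto. apply pow_incr. split. lra.
    assert (Cmod w < r0) by exact Hz. unfold r0 in H. lra.
  - intros k. assert (H := is_series_scal_l (pow_n w k) _ _ (Cser_correct _ (Col k))).
    change (scal ?a ?b) with (a * b)%C in H.
    eapply is_series_ext; [|rewrite Cmult_comm in H; exact H]. intros n. cbv beta. toC. ring.
  - eapply is_series_ext; [|apply (FpC z)].
    + intros n. cbv beta. symmetry. transitivity (sum_n (fun k => RtoC (g n) * (Pc z0 n k * pow_n w k))%C n).
      { apply sum_n_ext. intros k. toC. ring. }
      rewrite sum_n_Cmult_l, Pc_sum by lia. f_equal. f_equal. unfold w. ring.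
    + replace z with (z0 + w)%C by (unfold w; ring).
      eapply Rle_trans. apply Cmod_triangle. assert (Cmod w < r0) by exact Hz. unfold r0 in H. lra.
Qed.


Lemma RtoC_minus (y z : R) : (RtoC y - RtoC z)%C = RtoC (y - z).
Proof. unfold Cminus, Cplus, Copp, RtoC; simpl. f_equal; ring. Qed.

Lemma pringsheim (g : nat -> R) : (forall n, 0 <= g n) -> gf_analytic_at g (RtoC 1) ->
  exists s, 1 < s /\ ex_series (fun n => g n * s^n).
Proof.
  intros Hg [F [[r [a [hr HF1]]] HF2]].
  set (b := fun n => Re (a n)). set (Rf := fun y => Re (F (RtoC y))).
  assert (B1 : forall y, Rabs (y-1) < r -> is_series (fun n => b n * (y-1)^n) (Rf y)).
  { intros y Hy. specialize (HF1 (RtoC y)). rewrite RtoC_minus, Cmod_R in HF1.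
    apply is_series_C_iff in HF1; auto. destruct HF1 as [H1 _].
    eapply is_series_ext; [|exact H1]. intros n. cbv beta. rewrite pow_n_RtoC, Re_mult_RtoC. reflexivity. }
  assert (B2 : forall y, Rabs y < 1 -> is_series (fun n => g n * y^n) (Rf y)).
  { intros y Hy. specialize (HF2 (RtoC y)). rewrite Cmod_R in HF2. specialize (HF2 Hy).
    unfold gf_is in HF2. apply is_series_C_iff in HF2. destruct HF2 as [H1 _].
    eapply is_series_ext; [|exact H1]. intros n. cbv beta. rewrite pow_n_RtoC, Re_mult_RtoC. reflexivity. }
  pose proof (key g b r Rf hr Hg B1 B2) as Kc.
  set (rho := r / 2).
  assert (Hb : forall k, 0 <= b k).
  { intros k. specialize (Kc k 0%nat). rewrite sum_O in Kc.
    assert (0 <= PS_derive_n k g 0).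
    { unfold PS_derive_n. apply Rmult_le_pos; auto.
      apply Rmult_le_pos. apply pos_INR. apply Rlt_le, Rinv_0_lt_compat, INR_fact_lt_0. }
    pose proof (INR_fact_lt_0 k).
    destruct (Rle_or_lt 0 (b k)); auto. nra. }
  assert (Bs : ex_series (fun k => b k * rho^k)).
  { red. exists (Rf (1 + rho)). eapply is_series_ext; [|apply B1].
    intros n. simpl. replace (1 + rho - 1) with rho by ring. reflexivity.
    replace (1 + rho - 1) with rho by ring. unfold rho. rewrite Rabs_pos_eq; lra. }
  exists (1 + rho). split. unfold rho; lra.
  apply ex_series_bounded with (Series (fun k => b k * rho^k)).
  - intros n. apply Rmult_le_pos; auto. apply pow_le. unfold rho; lra.
  - intros M. eapply Rle_trans. apply comb; auto. unfold rho; lra.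
    apply psum_le; auto. intros n. apply Rmult_le_pos; auto. apply pow_le. unfold rho; lra.
Qed.

Theorem proposition2p1
  (p g : nat -> R) (m rP : R)
  (hp_nonneg : forall j, 0 <= p j)
  (hp_sum : is_series p 1)
  (hp01 : 0 < p 0%nat + p 1%nat < 1)
  (hm : is_series (fun j => INR j * p j) m)
  (hm1 : m < 1)
  (hrP : 1 < rP)
  (hP : gf_analytic_on_disc p rP)
  (hg0 : g 0%nat = 0)
  (hg_nonneg : forall j, 0 <= g j)
  (hg_sum : is_series g 1)
  (hg_yaglom : is_yaglom_limit p g) :
  gf_analytic_at g (RtoC 1) <->
  exists rG : R, 1 < rG /\ gf_analytic_on_disc g rG.
Proof.
  split.
  - intros H. destruct (pringsheim g hg_nonneg H) as [s [Hs1 Hs]].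
    exists s. split; auto. apply recenter; auto. lra.
  - intros [rG [HrG [F [HF1 HF2]]]]. exists F. split; auto.
    apply HF1. rewrite Cmod_R, Rabs_R1. lra.
Qed.
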